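(* Let $p$ be an odd prime and take $k=1$. For every $s\ge3$ and $0\le t\le p-1$, the $p$-Fibonacci number of the vertex $V_{s,t}=\lambda\big(p(2sp-(2s+1)),\,p(sp-(s+1))+t\big)$ is $$\mathcal M_{V_{s,t}}=\begin{cases}\dfrac{p^{s-3}(p-1)}{2}\Big(2(s-1)p^2+2t-(2s-5)\Big), & 0\le t<\frac{p-1}{2},\\[6pt] \dfrac{p^{s-3}(p-1)}{2}\Big(2(s-1)p^2+2t-2p-(2s-5)\Big), & \frac{p-1}{2}\le t\le p-1.\end{cases}$$
   Context: Fix an odd prime $p$ and an integer $k\ge 0$. For integers $0\le i<n$ write $\lambda(n,i)=(n-i,1^i)$ for the hook partition of $n$ with $n-i$ boxes in its first row and $i$ further boxes in its first column. If $\mu=\lambda(n',i')$ is obtained from $\lambda(n,i)$ by appending $m=(n'-i')-(n-i)\ge 0$ boxes to the first row and $n''=i'-i\ge 0$ boxes to the first column, we say $\mu$ is obtained by adding the block $B_{m,n''}$ ($m$ horizontal nodes, $n''$ vertical nodes). Put $x_s=p^k(sp-(s+1))$. The relevant part (''column $k$'') of the $p$-Bratteli diagram is the graded directed graph with vertices: on floor $2k+1$, $S_i=\lambda(p^k(p-1),i)$ for $0\le i<p^k(p-1)$; on floor $2(k+s)$ ($s\ge1$), $V_{s,l}=\lambda\big(p^k(2sp-(2s+1)),\,x_s+l\big)$ for $0\le l<p^k$; on floor $2(k+s)-1$ ($s\ge2$), $W_{s,l'}=\lambda\big(p^k((2s-1)p-2s),\,x_{s-1}+l'\big)$ for $0\le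 l'<p^{k+1}$; and edges, each labelled by the block added: (E1) $S_i\to V_{1,l}$ exactly when $i=p^kt+l$ with $0\le t\le p-2$, block $B_{p^kt,\,p^k(p-2-t)}$; (E2) for $s\ge2$, $0\le l<p^k$, $0\le\beta\le p-1$: $V_{s-1,l}\to W_{s,pl+\beta}$, block $B_{p^k(p-1)-((p-1)l+\beta),\,(p-1)l+\beta}$; (E3) for $s\ge 2$, $0\le l'<p^{k+1}$ and $t=\lfloor l'/p^k\rfloor$: $W_{s,l'}\to V_{s,l'-p^kt}$, block $B_{p^kt,\,p^k(p-1-t)}$. A path ending at a vertex $v$ is a sequence of edges starting at some $S_i$ and going up one floor at a time to $v$ ($S_i\to V_{1,\cdot}\to W_{2,\cdot}\to V_{2,\cdot}\to W_{3,\cdot}\to\cdots\to v$); $\mathcal P(v)$ is the set of all paths ending at $v$. The blocks of a path are numbered $B^2,B^3,\dots,B^N$: $B^2$ is the block of the edge leaving $S_i$, and for $j\ge2$, $B^{2j-1}$ is the block of the edge into $W_{j,\cdot}$ and $B^{2j}$ the block of the edge into $V_{j,\cdot}$. Write $B^j=B_{m_j,n_j}$. Descents: $1\in\mathrm{Des}(P)$ iff $m_2=p^kt$ with $0\le t<\frac{p-1}{2}$; $2\notin\mathrm{Des}(P)$; for $3\le j<N$, $j\in\mathrm{Des}(P)$ iff $m_j>m_{j+1}$ and $n_j<n_{j+1}$. $\mathrm{des}(P)=|\mathrm{Des}(P)|$. The $p^k$-Fibonacci number of a vertex $v$ is $\mathcal M_v=\sum_{P\in\mathcal P(v)}\mathrm{des}(P)$.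 *)

(* Defs.v *)
From mathcomp Require Import all_boot all_order all_algebra.
Set Implicit Arguments. Unset Strict Implicit. Unset Printing Implicit Defensive.

(* A path ending at V_{s,l} is encoded by the index i of its start S_i and the
   sequence v = [:: l_1; l'_2; l_2; l'_3; l_3; ...; l'_s; l_s] (size 2s-1) of
   the indices of the vertices V_{1,l_1}, W_{2,l'_2}, V_{2,l_2}, ..., V_{s,l_s}.
   Position of l_j in v is 2j-2, position of l'_j is 2j-3. *)

(* edge S_i -> V_{1,l} (E1) *)
Definition edgeE1 (p k i l : nat) : bool :=
  [&& i < p ^ k * (p - 1), l < p ^ k &
      has (fun t => i == p ^ k * t + l) (iota 0 (p - 1))].

(* edge V_{s-1,l} -> W_{s,l'} (E2) *)
Definition edgeE2 (p k l l' : nat) : bool :=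
  (l < p ^ k) && has (fun beta => l' == p * l + beta) (iota 0 p).

(* edge W_{s,l'} -> V_{s,l''} (E3) *)
Definition edgeE3 (p k l' l'' : nat) : bool :=
  (l' < p ^ (k + 1)) && (l'' == l' - p ^ k * (l' %/ p ^ k)).

Definition is_path (p k s l i : nat) (v : seq nat) : bool :=
  [&& 1 <= s, size v == (2 * s - 1)%N, edgeE1 p k i (nth 0 v 0),
      all (fun j => edgeE2 p k (nth 0 v (2 * j - 4)) (nth 0 v (2 * j - 3))
                    && edgeE3 p k (nth 0 v (2 * j - 3)) (nth 0 v (2 * j - 2)))
          (index_iota 2 s.+1)
    & nth 0 v (2 * s - 2) == l].

(* block B^q = (m_q, n_q), q = 2, ..., 2s *)
Definition block (p k i : nat) (v : seq nat) (q : nat) : nat * nat :=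
  if q == 2 then
    let t := i %/ p ^ k in (p ^ k * t, p ^ k * (p - 2 - t))
  else if odd q then
    (* edge V_{j-1,l} -> W_{j,l'} with l' = p l + beta *)
    let l := nth 0 v (q - 3) in
    let l' := nth 0 v (q - 2) in
    let beta := l' - p * l in
    let r := ((p - 1) * l + beta)%N in
    (p ^ k * (p - 1) - r, r)
  else
    (* edge W_{j,l'} -> V_{j,l'-p^k t} *)
    let l' := nth 0 v (q - 3) in
    let t := l' %/ p ^ k in
    (p ^ k * t, p ^ k * (p - 1 - t)).

Definition des (p k s i : nat) (v : seq nat) : nat :=
  let N := (2 * s)%N in
  let m2 := (block p k i v 2).1 in
  (has (fun t => (m2 == p ^ k * t) && (t < (p - 1) %/ 2)) (iota 0 p) : nat)
  + \sum_(3 <= j < N)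
      ((block p k i v j).1 > (block p k i v j.+1).1)
       && ((block p k i v j).2 < (block p k i v j.+1).2).

(* All indices occurring in a path are < p^(k+1), so paths are enumerated as
   (i, v) with i < p^k (p-1) and v a (2s-1)-tuple of indices < p^(k+1). *)
Definition fibM (p k s l : nat) : nat :=
  \sum_(i < p ^ k * (p - 1))
   \sum_(v : (2 * s - 1).-tuple 'I_(p ^ (k + 1)) | is_path p k s l i (map val v))
     des p k s i (map val v).

(* Main.v *)
Require Import Defs.
From mathcomp Require Import all_boot all_order all_algebra.
From mathcomp Require Import zify ring.
Set Implicit Arguments. Unset Strict Implicit. Unset Printing Implicit Defensive.


Fixpoint allL (m n : nat) : seq (seq nat) :=
  if n is n'.+1 then [seq rcons w x | w <- allL m n', x <- iota 0 m] else [:: [::]].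

Lemma mem_allL m n w : (w \in allL m n) = (size w == n) && all (fun x => x < m) w.
Proof.
elim: n w => [|n IH] w /=.
  by rewrite inE; case: w.
apply/idP/idP.
  case/allpairsP => [[u x] /= [Hu Hx ->]].
  move: Hu; rewrite IH => /andP[/eqP Hs Ha].
  by rewrite size_rcons Hs eqxx all_rcons Ha andbT; move: Hx; rewrite mem_iota.
case/lastP: w => [|u x]; first by [].
rewrite size_rcons eqSS all_rcons => /andP[Hs /andP[Hx Ha]].
apply/allpairsP; exists (u, x) => /=; split => //.
  by rewrite IH Hs Ha.
by rewrite mem_iota.
Qed.

Lemma uniq_allL m n : uniq (allL m n).
Proof.
elim: n => [|n IH] //=.
apply: allpairs_uniq => //; first exact: iota_uniq.
move=> [u x] [u' x'] _ _ /= E.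
by have [-> ->] := rcons_inj E.
Qed.

Lemma size_allL m n : size (allL m n) = m ^ n.
Proof. by elim: n => //= n IH; rewrite size_allpairs IH size_iota expnS mulnC. Qed.

Lemma tuple_sum (m n : nat) (F : seq nat -> nat) :
  \sum_(v : n.-tuple 'I_m) F (map val v) = \sum_(w <- allL m n) F w.
Proof.
rewrite -(big_map (fun v : n.-tuple 'I_m => map val v) xpredT F).
apply: perm_big; apply: uniq_perm.
- rewrite map_inj_uniq ?index_enum_uniq //.
  by move=> v v' E; apply: val_inj; apply: (inj_map val_inj).
- exact: uniq_allL.
move=> w; rewrite mem_allL; apply/idP/idP.
  case/mapP => v _ ->; rewrite size_map size_tuple eqxx /=.
  by apply/allP => x /mapP [y _ ->].
case/andP => /eqP Hs Ha.
pose u := pmap (insub : nat -> option 'I_m) w.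
have Hu : map val u = w.
  rewrite /u (pmap_filter (insubK (ordinal m))).
  rewrite -[RHS](all_filterP Ha); apply: eq_filter => x; by case: insubP => [? -> _|/negbTE ->].
have Hsz : size u == n by rewrite -Hs -Hu size_map.
apply/mapP; exists (Tuple Hsz); first exact: mem_index_enum.
by rewrite /= Hu.
Qed.


Lemma sum_pick m r (F : nat -> nat) : r < m ->
  \sum_(y <- iota 0 m) (if y == r then F y else 0) = F r.
Proof.
move=> Hr; rewrite (bigD1_seq r) ?mem_iota ?iota_uniq //= eqxx big1 ?addn0 //.
by move=> y /negbTE ->.
Qed.

Lemma div_range p a x : p * a <= x < p * a + p -> x %/ p = a.
Proof.
move=> H; have Hp : 0 < p by lia.
have -> : x = a * p + (x - p * a) by lia.
by rewrite divnMDl // divn_small ?addn0 //; lia.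
Qed.

Lemma edge_cond p a x y : a < p ->
  (edgeE2 p 1 a x && edgeE3 p 1 x y) =
  [&& p * a <= x < p * a + p, x < p ^ 2 & y == x - p * a].
Proof.
move=> Ha; rewrite /edgeE2 /edgeE3 expn1 Ha /=.
have -> : has (fun beta => x == p * a + beta) (iota 0 p) = (p * a <= x < p * a + p).
  apply/hasP/idP => [[b]|H]; first by rewrite mem_iota => Hb /eqP ->; lia.
  by exists (x - p * a); [rewrite mem_iota; lia | apply/eqP; lia].
case H: (p * a <= x < p * a + p) => //=.
by rewrite (div_range H).
Qed.

Lemma edge_sum p a (F : nat -> nat -> nat) : a < p ->
  \sum_(x <- iota 0 (p ^ 2)) \sum_(y <- iota 0 (p ^ 2))
     (if edgeE2 p 1 a x && edgeE3 p 1 x y then F x y else 0)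
  = \sum_(u <- iota 0 p) F (p * a + u) u.
Proof.
move=> Ha.
have Hp2 : p * a + p <= p ^ 2 by rewrite expnS expn1; nia.
transitivity (\sum_(x <- iota 0 (p ^ 2)) (if p * a <= x < p * a + p then F x (x - p * a) else 0)).
  apply: eq_big_seq => x; rewrite mem_iota => /andP[_ Hx].
  under eq_bigr => y _ do rewrite edge_cond // Hx /=.
  case: ifP => H.
    by apply: sum_pick; lia.
  by rewrite big1.
have E : forall n, iota 0 n = index_iota 0 n by move=> n; rewrite /index_iota subn0.
rewrite !E (@big_cat_nat _ _ _ (p * a)) /=; [|lia|lia].
rewrite (@big_cat_nat _ _ _ (p * a + p) (p * a)) /=; [|lia|lia].
rewrite big1_seq ?add0n; last by move=> i; rewrite mem_index_iota => /andP[_ H]; case: ifP => //; lia.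
rewrite [X in _ + X]big1_seq ?addn0; last by move=> i; rewrite mem_index_iota => /andP[_ H]; case: ifP => //; lia.
rewrite -{1}[p * a]add0n big_addn.
have -> : p * a + p - p * a = p by lia.
apply: eq_big_seq => u; rewrite mem_index_iota => H.
rewrite ifT; last by lia.
have -> : u + p * a - p * a = u by lia.
by rewrite addnC.
Qed.


Lemma nth_catl (w z : seq nat) n : n < size w -> nth 0 (w ++ z) n = nth 0 w n.
Proof. by move=> H; rewrite nth_cat H. Qed.

Lemma nth_catr (w z : seq nat) n : nth 0 (w ++ z) (size w + n) = nth 0 z n.
Proof. by rewrite nth_cat ltnNge leq_addr /= addKn. Qed.

Lemma isp_split p k s l i w :
  is_path p k s l i w = is_path p k s (nth 0 w (2 * s - 2)) i w && (nth 0 w (2 * s - 2) == l).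
Proof. by rewrite /is_path eqxx andbT !andbA. Qed.

Lemma isp_ext p s x y l i (w : seq nat) : 0 < s -> size w = 2 * s - 1 ->
  is_path p 1 s.+1 l i (w ++ [:: x; y]) =
  [&& is_path p 1 s (nth 0 w (2 * s - 2)) i w, edgeE2 p 1 (nth 0 w (2 * s - 2)) x,
      edgeE3 p 1 x y & y == l].
Proof.
move=> Hs Hw; rewrite /is_path Hs Hw eqxx /= size_cat Hw /=.
have -> : (2 * s - 1 + 2 == 2 * s.+1 - 1) = true by apply/eqP; lia.
rewrite nth_catl ?Hw; last lia.
have -> : index_iota 2 s.+2 = index_iota 2 s.+1 ++ [:: s.+1].
  rewrite /index_iota.
  have -> : s.+2 - 2 = (s.+1 - 2) + 1 by lia.
  rewrite iotaD; have -> : 2 + (s.+1 - 2) = s.+1 by lia.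
  by [].
rewrite all_cat /= andbT.
have -> : all (fun j => edgeE2 p 1 (nth 0 (w ++ [:: x; y]) (2 * j - 4)) (nth 0 (w ++ [:: x; y]) (2 * j - 3))
              && edgeE3 p 1 (nth 0 (w ++ [:: x; y]) (2 * j - 3)) (nth 0 (w ++ [:: x; y]) (2 * j - 2)))
            (index_iota 2 s.+1) =
          all (fun j => edgeE2 p 1 (nth 0 w (2 * j - 4)) (nth 0 w (2 * j - 3))
              && edgeE3 p 1 (nth 0 w (2 * j - 3)) (nth 0 w (2 * j - 2)))
            (index_iota 2 s.+1).
  apply: eq_in_all => j; rewrite mem_index_iota => Hj.
  by rewrite !nth_catl ?Hw //; lia.
rewrite nth_catl ?Hw; last lia.
have -> : 2 * s.+1 - 4 = 2 * s - 2 by lia.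
have -> : 2 * s.+1 - 3 = size w + 0 by lia.
have -> : 2 * s.+1 - 2 = size w + 1 by lia.
rewrite !nth_catr /=.
by rewrite eqxx andbT !andbA.
Qed.


Lemma isp_size p k s l i w : is_path p k s l i w -> size w = 2 * s - 1.
Proof. by case/and5P => _ /eqP. Qed.

Lemma isp_last p s l i w : 1 < s -> is_path p 1 s l i w ->
  [/\ nth 0 w (2 * s - 4) < p, nth 0 w (2 * s - 2) < p &
      nth 0 w (2 * s - 3) = p * nth 0 w (2 * s - 4) + nth 0 w (2 * s - 2)].
Proof.
move=> Hs /and5P[_ _ _ /allP /(_ s) H _].
have /H /andP[] : s \in index_iota 2 s.+1 by rewrite mem_index_iota; lia.
rewrite /edgeE2 /edgeE3 expn1 => /andP[Hb /hasP[be]].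
rewrite mem_iota add0n => Hbe /eqP -> /andP[_ /eqP ->].
have -> : (p * nth 0 w (2 * s - 4) + be) %/ p = nth 0 w (2 * s - 4).
  by apply: div_range; lia.
split => //; lia.
Qed.

Lemma isp_lt p s l i w : 0 < s -> is_path p 1 s l i w -> nth 0 w (2 * s - 2) < p.
Proof.
case: s => // [[|s]] _ H.
  by case/and5P: H => _ _ /and3P[_ ] ; rewrite expn1.
by case: (isp_last (isT : 1 < s.+2) H).
Qed.

Definition PS p s (G : nat -> seq nat -> nat) :=
  \sum_(0 <= i < p * (p - 1))
    \sum_(w <- allL (p ^ 2) (2 * s - 1) | is_path p 1 s (nth 0 w (2 * s - 2)) i w) G i w.

Lemma PS_ext p s G : 0 < s ->
  PS p s.+1 G = PS p s (fun i w => \sum_(u <- iota 0 p) G i (w ++ [:: p * nth 0 w (2 * s - 2) + u; u])).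
Proof.
move=> Hs; rewrite /PS; apply: eq_bigr => i _.
have -> : 2 * s.+1 - 1 = (2 * s - 1).+2 by lia.
rewrite big_mkcond [RHS]big_mkcond /= big_allpairs_dep /= big_allpairs_dep /=.
apply: eq_big_seq => w; rewrite mem_allL => /andP[/eqP Hw _].

have E : forall x y, rcons (rcons w x) y = w ++ [:: x; y] by move=> x y; rewrite -!cats1 -catA.
have E2 : 2 * s.+1 - 2 = size w + 1 by lia.
under eq_bigr => x _ do under eq_bigr => y _ do rewrite E isp_ext // E2 nth_catr /= eqxx andbT.
case: ifP => H; last by rewrite big1 // => x _; rewrite big1.
exact: (edge_sum (fun x y => G i (w ++ [:: x; y])) (isp_lt Hs H)).
Qed.


Definition D1 p a u : bool :=
  (p * a < p * (p - 1) - ((p - 1) * a + u)) && ((p - 1) * a + u < p * (p - 1 - a)).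
Definition D2 p b a u : bool :=
  (p * (p - 1) - ((p - 1) * a + u) < p * b) && (p * (p - 1 - b) < (p - 1) * a + u).

Lemma block_cat p i (w z : seq nat) q : 0 < size w -> q <= size w + 1 ->
  block p 1 i (w ++ z) q = block p 1 i w q.
Proof. by move=> H0 H; rewrite /block !nth_catl //; lia. Qed.

Lemma block_even p i v j : 1 < j ->
  block p 1 i v (2 * j) = (p * (nth 0 v (2 * j - 3) %/ p), p * (p - 1 - nth 0 v (2 * j - 3) %/ p)).
Proof.
move=> Hj; rewrite /block expn1.
have -> : (2 * j == 2) = false by apply/negbTE; lia.
by rewrite oddM.
Qed.

Lemma block_odd p i v j : 0 < j ->
  block p 1 i v (2 * j).+1 =
  (p * (p - 1) - ((p - 1) * nth 0 v (2 * j - 2) + (nth 0 v (2 * j - 1) - p * nth 0 v (2 * j - 2))),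
   (p - 1) * nth 0 v (2 * j - 2) + (nth 0 v (2 * j - 1) - p * nth 0 v (2 * j - 2))).
Proof.
move=> Hj; rewrite /block expn1 /= oddM /=.
have -> : ((2 * j).+1 == 2) = false by apply/negbTE; lia.
by rewrite (_ : (2 * j).+1 - 3 = 2 * j - 2); [|lia]; rewrite (_ : (2 * j).+1 - 2 = 2 * j - 1); [|lia].
Qed.

Lemma des_ext p s i w u : 0 < s -> is_path p 1 s (nth 0 w (2 * s - 2)) i w -> u < p ->
  des p 1 s.+1 i (w ++ [:: p * nth 0 w (2 * s - 2) + u; u]) =
  des p 1 s i w + D1 p (nth 0 w (2 * s - 2)) u +
  (if 1 < s then (D2 p (nth 0 w (2 * s - 4)) (nth 0 w (2 * s - 2)) u : nat) else 0).
Proof.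
move=> Hs H Hu; have Hw := isp_size H; have Ha := isp_lt Hs H.
set a := nth 0 w (2 * s - 2) in Ha *.
set w' := w ++ _.
have Hw0 : 0 < size w by lia.
rewrite /des (@block_cat p i w _ 2) //; last lia.
have E1 : 2 * s.+1 = (2 * s).+2 by lia.
rewrite E1 big_nat_recr /=; last lia.
have Ha' : nth 0 w' (2 * s - 2) = a by rewrite nth_catl //; lia.
have Hx : nth 0 w' (2 * s - 1) = p * a + u by rewrite (_ : 2 * s - 1 = size w + 0) ?nth_catr //; lia.
have Hd : (p * a + u) %/ p = a by apply: div_range; lia.
have Hsub : p * a + u - p * a = u by lia.
rewrite (block_odd _ _ _ Hs) Ha' Hx Hsub.
rewrite (_ : (2 * s).+2 = 2 * s.+1); last lia.
rewrite (block_even _ _ _ (_ : 1 < s.+1)); last lia.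
rewrite (_ : 2 * s.+1 - 3 = 2 * s - 1); last lia.
rewrite Hx Hd.
case: (ltnP 1 s) => Hs2; last first.
  have -> : s = 1 by lia.
  by rewrite !big_geq // addn0 addnA.
rewrite big_nat_recr /=; last lia.
rewrite (@block_cat p i w _ (2 * s)) //; last lia.
have [Hb Ha2 Hm] := isp_last Hs2 H.
rewrite (block_even _ _ _ Hs2) Hm.
rewrite (_ : (p * nth 0 w (2 * s - 4) + nth 0 w (2 * s - 2)) %/ p = nth 0 w (2 * s - 4)); last first.
  by apply: div_range; lia.
rewrite (block_odd _ _ _ Hs) Ha' Hx Hsub -/a.
set S1 := \sum_(3 <= j < 2 * s) _.
set S2 := \sum_(3 <= j < 2 * s) _.
have -> : S1 = S2.
  apply: eq_big_nat => j Hj.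
  by rewrite !(@block_cat p i w) //; lia.
by rewrite /D1 /D2 /= !addnA addnAC.
Qed.


Lemma eq_PS p s G1 G2 :
  (forall i w, i < p * (p - 1) -> is_path p 1 s (nth 0 w (2 * s - 2)) i w -> G1 i w = G2 i w) ->
  PS p s G1 = PS p s G2.
Proof.
move=> H; apply: eq_big_nat => i Hi; apply: eq_bigr => w Hw; exact: H.
Qed.

Lemma PS_add p s G1 G2 : PS p s (fun i w => G1 i w + G2 i w) = PS p s G1 + PS p s G2.
Proof. by rewrite /PS -big_split; apply: eq_bigr => i _; rewrite big_split. Qed.

Lemma PS_mul p s c G : PS p s (fun i w => c * G i w) = c * PS p s G.
Proof. by rewrite /PS big_distrr; apply: eq_bigr => i _; rewrite big_distrr. Qed.

Lemma E1_cond p i x : i < p * (p - 1) -> edgeE1 p 1 i x = (x == i %% p).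
Proof.
move=> Hi; have Hp : 0 < p by case: p Hi.
rewrite /edgeE1 !expn1 Hi /=.
apply/andP/eqP => [[Hx /hasP[t]]|->].
  rewrite mem_iota => Ht /eqP ->.
  by rewrite mulnC modnMDl modn_small.
split; first by rewrite ltn_mod.
apply/hasP; exists (i %/ p).
  rewrite mem_iota add0n ltn_divLR //; by rewrite mulnC.
by rewrite {1}(divn_eq i p) mulnC.
Qed.

Lemma PS1 p G : 0 < p -> PS p 1 G = \sum_(0 <= i < p * (p - 1)) G i [:: i %% p].
Proof.
move=> Hp; rewrite /PS; apply: eq_big_nat => i Hi.
rewrite big_mkcond (_ : 2 * 1 - 1 = 1) //.
rewrite (_ : allL (p ^ 2) 1 = [seq rcons w x | w <- [:: [::]], x <- iota 0 (p ^ 2)]) //.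
rewrite big_allpairs_dep big_cons big_nil /= addn0.
rewrite /is_path /=.
under eq_bigr => x _ do rewrite eqxx andbT.
under eq_bigr => x _ do rewrite E1_cond //.
apply: (sum_pick (fun x => G i [:: x])).
by rewrite expnS expn1 (leq_trans (_ : _ < p)) ?ltn_mod // leq_pmulr.
Qed.

Lemma sum_div p q (F : nat -> nat) :
  \sum_(0 <= i < p * q) F i = \sum_(0 <= j < q) \sum_(0 <= u < p) F (p * j + u).
Proof.
elim: q => [|q IH]; first by rewrite muln0 !big_geq.
rewrite big_nat_recr //= -IH mulnS addnC (@big_cat_nat _ _ _ (p * q)) /=; [|lia|lia].
congr (_ + _).
rewrite -{1}[p * q]add0n big_addn (_ : p * q + p - p * q = p); last lia.
by apply: eq_bigr => u _; rewrite addnC.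
Qed.


Lemma iotaE n : iota 0 n = index_iota 0 n.
Proof. by rewrite /index_iota subn0. Qed.

Lemma cnt1 p n (H : nat -> nat) : 0 < p ->
  PS p n.+1 (fun i w => H (nth 0 w (2 * n.+1 - 2))) = (p - 1) * p ^ n * \sum_(0 <= u < p) H u.
Proof.
move=> Hp; elim: n H => [|n IH] H.
  rewrite PS1 // sum_div expn0 muln1 /=.
  rewrite (eq_bigr (fun _ => \sum_(0 <= u < p) H u)); last first.
    move=> j _; apply: eq_big_nat => u Hu.
    by rewrite mulnC modnMDl modn_small //; lia.
  by rewrite sum_nat_const_nat subn0 muln1.
rewrite (@PS_ext p n.+1) //.
rewrite (@eq_PS _ _ _ (fun i w => \sum_(0 <= u < p) H u)); last first.
  move=> i w _ Hw; rewrite iotaE; apply: eq_bigr => u _.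
  have Hs := isp_size Hw.
  by rewrite (_ : 2 * n.+2 - 2 = size w + 1) ?nth_catr //; lia.
rewrite (IH (fun _ => \sum_(0 <= u < p) H u)) sum_nat_const_nat subn0 expnS; lia.
Qed.

Lemma cnt2 p n (H : nat -> nat -> nat) : 0 < p ->
  PS p n.+2 (fun i w => H (nth 0 w (2 * n.+2 - 4)) (nth 0 w (2 * n.+2 - 2))) =
  (p - 1) * p ^ n * \sum_(0 <= a < p) \sum_(0 <= u < p) H a u.
Proof.
move=> Hp; rewrite PS_ext //.
rewrite (@eq_PS _ _ _ (fun i w => (fun a => \sum_(0 <= u < p) H a u) (nth 0 w (2 * n.+1 - 2)))); last first.
  move=> i w _ Hw; rewrite iotaE; apply: eq_bigr => u _.
  have Hs := isp_size Hw.
  rewrite (_ : 2 * n.+2 - 2 = size w + 1) ?nth_catr //; last lia.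
  rewrite nth_catl; last lia.
  by rewrite (_ : 2 * n.+2 - 4 = 2 * n.+1 - 2); last lia.
exact: (cnt1 n (fun a => \sum_(0 <= u < p) H a u) Hp).
Qed.


Lemma D1_char h a u : a < 2 * h + 1 -> u < 2 * h + 1 ->
  D1 (2 * h + 1) a u = ((a < h) || ((a == h) && (u < h))).
Proof.
move=> Ha Hu; rewrite /D1.
have -> : 2 * h + 1 - 1 = 2 * h by lia.
case: (ltngtP a h) => Hah /=.
- apply/andP; split; nia.
- apply/negbTE/nandP; left; nia.
- subst a; case: (ltnP u h) => Huh /=.
    apply/andP; split; nia.
  apply/negbTE/nandP; left; nia.
Qed.

Lemma D2_char p b a u : b < p -> a < p -> u < p ->
  D2 p b a u = ((p <= b + a) || ((b + a == p - 1) && (a < u))).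
Proof.
move=> Hb Ha Hu; rewrite /D2.
case: (ltnP (b + a) p) => H /=.
- have [E|E] : b + a = p - 1 \/ b + a < p - 1 by lia.
  + rewrite E eqxx /=; have -> : b = p - 1 - a by lia.
    case: (ltnP a u) => Hau /=.
      apply/andP; split; nia.
    apply/negbTE/nandP; left; nia.
  + rewrite (_ : (b + a == p - 1) = false) /=; last by apply/negbTE; lia.
    apply/negbTE/nandP; left; nia.
- apply/andP; split; nia.
Qed.


Lemma fibM_PS p s t :
  fibM p 1 s t = PS p s (fun i w => (nth 0 w (2 * s - 2) == t) * des p 1 s i w).
Proof.
rewrite /fibM /PS big_mkord expn1 (_ : 1 + 1 = 2) //.
apply: eq_bigr => i _.
rewrite big_mkcond (@tuple_sum _ _ (fun w => if is_path p 1 s t i w then des p 1 s i w else 0)).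
rewrite [RHS]big_mkcond; apply: eq_bigr => w _.
rewrite isp_split; case: (is_path _ _ _ _ _ _) => //=.
by case: (_ == t); rewrite ?mul1n ?mul0n.
Qed.


Lemma sum_id n : 2 * \sum_(0 <= a < n) a = n * (n - 1).
Proof.
elim: n => [|n IH]; first by rewrite big_geq.
rewrite big_nat_recr //= mulnDr IH; nia.
Qed.

Lemma sum_true m n (P : nat -> bool) : (forall a, m <= a < n -> P a) ->
  \sum_(m <= a < n) (P a : nat) = n - m.
Proof.
move=> H; rewrite (eq_big_nat _ _ (F2 := fun _ => 1)); first by rewrite sum_nat_const_nat muln1.
by move=> a /H ->.
Qed.

Lemma sum_false m n (P : nat -> bool) : (forall a, m <= a < n -> ~~ P a) ->
  \sum_(m <= a < n) (P a : nat) = 0.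
Proof.
move=> H; rewrite big1_seq // => a /andP[_]; rewrite mem_index_iota => /H /negbTE -> //.
Qed.

Lemma sum_lt n u : u <= n -> \sum_(0 <= a < n) (a < u : nat) = u.
Proof.
move=> Hu; rewrite (@big_cat_nat _ _ _ u) //= sum_true ?subn0; last by move=> a /andP[].
by rewrite sum_false ?addn0 // => a /andP[]; rewrite -leqNgt.
Qed.

Lemma sumD1 h u : u < 2 * h + 1 ->
  \sum_(0 <= a < 2 * h + 1) (D1 (2 * h + 1) a u : nat) = h + (u < h).
Proof.
move=> Hu.
rewrite (@big_cat_nat _ _ _ h) //=; last lia.
rewrite (@big_cat_nat _ _ _ h.+1 h) //=; last lia.
rewrite big_nat1 sum_true; last by move=> a Ha; rewrite D1_char ?Ha //; lia.
rewrite sum_false ?addn0; last by move=> a Ha; rewrite D1_char; [|lia|lia]; apply/negP => /orP[|/andP[/eqP]]; lia.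
by rewrite D1_char ?ltnn ?eqxx //; lia.
Qed.

Lemma sumD2 p a u : a < p -> u < p ->
  \sum_(0 <= b < p) (D2 p b a u : nat) = a + (a < u).
Proof.
move=> Ha Hu.
rewrite (@big_cat_nat _ _ _ (p - 1 - a)) //=; last lia.
rewrite (@big_cat_nat _ _ _ (p - a) (p - 1 - a)) //=; last lia.
rewrite (_ : p - a = (p - 1 - a).+1); last lia.
rewrite big_nat1 sum_false; last by move=> b Hb; rewrite D2_char; [|lia|lia|lia]; apply/negP => /orP[|/andP[/eqP]]; lia.
rewrite sum_true; last by move=> b Hb; rewrite D2_char; [|lia|lia|lia]; apply/orP; left; lia.
rewrite D2_char; [|lia|lia|lia].
rewrite (_ : p <= p - 1 - a + a = false); last lia.
rewrite (_ : p - 1 - a + a == p - 1); last lia.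
  rewrite /= add0n addnC; congr (_ + _); lia.
lia.
Qed.


Definition T p s := PS p s (fun i w => des p 1 s i w).

Lemma T1 p h : p = 2 * h + 1 -> T p 1 = p * h.
Proof.
move=> Hp; have Hp0 : 0 < p by lia.
have Hh : (p - 1) %/ 2 = h by rewrite Hp; lia.
rewrite /T PS1 //.
rewrite (eq_big_nat _ _ (F2 := fun i => (i %/ p < h : nat))); last first.
  move=> i Hi; rewrite /des big_geq // addn0 expn1 Hh.
  congr nat_of_bool; apply/hasP/idP => [[t]|H].
    by rewrite mem_iota => _ /andP[/eqP /(congr1 (fun x => x %/ p))]; rewrite !mulKn // => ->.
  exists (i %/ p); last by rewrite eqxx H.
  have Hi' : i < p * (p - 1) by case/andP: Hi.
  rewrite mem_iota add0n ltn_divLR //; apply: (leq_trans Hi'); rewrite leq_pmul2l //; lia.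
rewrite sum_div.
rewrite (eq_big_nat _ _ (F2 := fun j => p * (j < h))); last first.
  move=> j _; rewrite (eq_big_nat _ _ (F2 := fun _ => (j < h : nat))); last first.
    by move=> u Hu; rewrite (@div_range p j) //; lia.
  by rewrite sum_nat_const_nat subn0.
by rewrite -big_distrr /= sum_lt //; lia.
Qed.

Lemma T_ext p s : 0 < p -> 0 < s ->
  T p s.+1 = p * T p s
   + PS p s (fun i w => \sum_(0 <= u < p) (D1 p (nth 0 w (2 * s - 2)) u : nat))
   + PS p s (fun i w => \sum_(0 <= u < p)
        (if 1 < s then (D2 p (nth 0 w (2 * s - 4)) (nth 0 w (2 * s - 2)) u : nat) else 0)).
Proof.
move=> Hp Hs; rewrite /T PS_ext //.
rewrite (@eq_PS _ _ _ (fun i w => p * des p 1 s i w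
   + \sum_(0 <= u < p) (D1 p (nth 0 w (2 * s - 2)) u : nat)
   + \sum_(0 <= u < p)
        (if 1 < s then (D2 p (nth 0 w (2 * s - 4)) (nth 0 w (2 * s - 2)) u : nat) else 0))).
  by rewrite PS_add PS_add (PS_mul p s p (fun i w => des p 1 s i w)).
move=> i w _ Hw; rewrite iotaE.
rewrite (eq_big_nat _ _ (F2 := fun u => des p 1 s i w + D1 p (nth 0 w (2 * s - 2)) u
   + (if 1 < s then (D2 p (nth 0 w (2 * s - 4)) (nth 0 w (2 * s - 2)) u : nat) else 0))); last first.
  by move=> u /andP[_ Hu]; rewrite des_ext.
move: (des p 1 s i w) => d.
by rewrite !big_split /= sum_nat_const_nat subn0 mulnC.
Qed.

Lemma T_formula p h n : p = 2 * h + 1 ->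
  T p n.+2 = h * p ^ n * (8 * h * h + 8 * h + 1 + 8 * n * (h * h + h)).
Proof.
move=> Hp; have Hp0 : 0 < p by lia.
have SD1 : \sum_(0 <= a < p) \sum_(0 <= u < p) (D1 p a u : nat) = p * h + h.
  rewrite exchange_big /=.
  rewrite (eq_big_nat _ _ (F2 := fun u => h + (u < h))); last first.
    by move=> u /andP[_ Hu]; rewrite Hp sumD1 //; lia.
  by rewrite big_split /= sum_nat_const_nat subn0 sum_lt; lia.
have SD2 : \sum_(0 <= b < p) \sum_(0 <= a < p) \sum_(0 <= u < p) (D2 p b a u : nat) = p * p * h + p * h.
  rewrite exchange_big /=.
  rewrite (eq_big_nat _ _ (F2 := fun a => \sum_(0 <= u < p) \sum_(0 <= b < p) (D2 p b a u : nat))); last first.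
    by move=> a _; rewrite exchange_big.
  rewrite exchange_big /=.
  rewrite (eq_big_nat _ _ (F2 := fun u => p * h + u)); last first.
    move=> u /andP[_ Hu].
    rewrite (eq_big_nat _ _ (F2 := fun a => a + (a < u))); last first.
      by move=> a /andP[_ Ha]; rewrite sumD2.
    rewrite big_split /= sum_lt; last lia.
    have := sum_id p; rewrite Hp; lia.
  rewrite big_split /= sum_nat_const_nat subn0.
  have := sum_id p; rewrite Hp; nia.
elim: n => [|n IH].
  rewrite T_ext // (T1 Hp) /=.
  have /= -> := (@cnt1 p 0 (fun a => \sum_(0 <= u < p) (D1 p a u : nat)) Hp0).
  have -> : PS p 1 (fun _ _ => \sum_(0 <= u < p) 0) = 0.
    by rewrite /PS big1 // => i _; rewrite big1 // => w _; rewrite big1.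
  rewrite SD1 Hp; nia.
rewrite T_ext // IH.
have /= -> := (@cnt1 p n.+1 (fun a => \sum_(0 <= u < p) (D1 p a u : nat)) Hp0).
have /= -> := (@cnt2 p n (fun b a => \sum_(0 <= u < p) (D2 p b a u : nat)) Hp0).
rewrite SD1 SD2 expnS Hp; nia.
Qed.


Lemma fib_formula p h n t : p = 2 * h + 1 -> t < p ->
  fibM p 1 n.+3 t = T p n.+2 + (p - 1) * p ^ n.+1 * (h + (t < h)) + (p - 1) * p ^ n * (p * h + t).
Proof.
move=> Hp Ht; have Hp0 : 0 < p by lia.
rewrite fibM_PS (@PS_ext p n.+2) //.
rewrite (@eq_PS _ _ _ (fun i w => des p 1 n.+2 i w + D1 p (nth 0 w (2 * n.+2 - 2)) t
   + D2 p (nth 0 w (2 * n.+2 - 4)) (nth 0 w (2 * n.+2 - 2)) t)); last first.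
  move=> i w _ Hw; have Hs := isp_size Hw.
  transitivity (\sum_(u <- iota 0 p) (if u == t then des p 1 n.+3 i (w ++ [:: p * nth 0 w (2 * n.+2 - 2) + u; u]) else 0)).
    apply: eq_big_seq => u _; rewrite (_ : 2 * n.+3 - 2 = size w + 1) ?nth_catr /=; last lia.
    by case: (u == t); rewrite ?mul1n ?mul0n.
  rewrite (sum_pick (fun u => des p 1 n.+3 i (w ++ [:: p * nth 0 w (2 * n.+2 - 2) + u; u]))) //.
  by rewrite des_ext.
rewrite PS_add (PS_add p n.+2 (fun i w => des p 1 n.+2 i w)).
have /= -> := (@cnt1 p n.+1 (fun a => (D1 p a t : nat)) Hp0).
have /= -> := (@cnt2 p n (fun b a => (D2 p b a t : nat)) Hp0).
have -> : \sum_(0 <= a < p) (D1 p a t : nat) = h + (t < h) by rewrite Hp sumD1 //; lia.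
have -> : \sum_(0 <= b < p) \sum_(0 <= a < p) (D2 p b a t : nat) = p * h + t.
  rewrite exchange_big /=.
  rewrite (eq_big_nat _ _ (F2 := fun a => a + (a < t))); last first.
    by move=> a /andP[_ Ha]; rewrite sumD2.
  rewrite big_split /= sum_lt; last lia.
  have := sum_id p; rewrite Hp; lia.
by [].
Qed.

Unset Implicit Arguments.
Import GRing.Theory Num.Theory.
Local Open Scope ring_scope.


Theorem mainTheorem6 (p s t : nat) :
  prime p -> odd p -> (3 <= s)%N -> (t <= p - 1)%N ->
  (fibM p 1 s t)%:R =
    (if (t < (p - 1) %/ 2)%N then
       (p%:R ^+ (s - 3) * (p%:R - 1) / 2) *
         (2 * (s%:R - 1) * p%:R ^+ 2 + 2 * t%:R - (2 * s%:R - 5))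
     else
       (p%:R ^+ (s - 3) * (p%:R - 1) / 2) *
         (2 * (s%:R - 1) * p%:R ^+ 2 + 2 * t%:R - 2 * p%:R - (2 * s%:R - 5)) : rat).
Proof.
move=> Hpr Hodd Hs Ht.
have Hp2 := prime_gt1 Hpr.
set h := p./2.
have Hp : p = (2 * h + 1)%N by rewrite /h -{1}(odd_double_half p) Hodd; lia.
have Htp : (t < p)%N by lia.
have Hh : ((p - 1) %/ 2)%N = h by rewrite Hp; lia.
have [n ->] : exists n, s = n.+3 by exists (s - 3)%N; lia.
rewrite (fib_formula n Hp Htp) (T_formula n Hp) Hh (_ : (n.+3 - 3)%N = n); last lia.
have Hp1 : (p - 1)%N = (2 * h)%N by lia.
rewrite Hp1 -addn3.
case: ifP => Hth /=; rewrite ?addn0 Hp !(natrD, natrM, natrX) exprS.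
all: by field.
Qed.
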